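(* Let $f,g:\mathbb{R}^n\to\mathbb{R}$ satisfy assumptions (A1)–(A4) below, let $x_0\in\Omega=\{x:g(x)\le 0\}$, and suppose the bounded feasible set $\Omega_{f(x_0)}=\{x: f(x)\le f(x_0),\ g(x)\le 0\}$ is non-empty. Then for $\zeta\in[0,1]$ the vector field $\mathbf{s}_\zeta(x)=-\frac{\nabla f(x)}{|\nabla f(x)|}-\zeta\frac{\nabla g(x)}{|\nabla g(x)|}$ is Lipschitz continuous on $\Omega_{f(x_0)}$, i.e. there is a constant $L>0$ with $|\mathbf{s}_\zeta(x)-\mathbf{s}_\zeta(y)|\le L|x-y|$ for all $x,y\in\Omega_{f(x_0)}$.
   Context: Assumptions: (A1) $\lim_{|x|\to\infty} f(x)=+\infty$; (A2) $\nabla f(x)\neq 0$ for all $x\in\Omega$; (A3) $\nabla g(x)\neq 0$ for all $x\in\Omega$; (A4) $f$ and $g$ are twice continuously differentiable. $|\cdot|$ denotes the Euclidean norm. *)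

(* Defs.v *)
From HB Require Import structures.
From mathcomp Require Import all_boot all_order all_algebra.
From mathcomp Require Import all_classical all_reals all_analysis.
Set Implicit Arguments. Unset Strict Implicit. Unset Printing Implicit Defensive.
Import Order.TTheory GRing.Theory Num.Theory.
Import numFieldNormedType.Exports.
Local Open Scope classical_set_scope.
Local Open Scope ring_scope.

Section Defs.
Context {R : realType} {n : nat}.

(* Euclidean norm |v| on R^n (the library's matrix norm is the max norm). *)
Definition enorm (v : 'rV[R]_n) : R := Num.sqrt (\sum_(i < n) v 0 i ^+ 2).

Definition ebasis (i : 'I_n) : 'rV[R]_n := delta_mx 0 i.

Definition partial (f : 'rV[R]_n -> R) (i : 'I_n) (x : 'rV[R]_n) : R :=
  'D_(ebasis i) f x.

Definition gradient (f : 'rV[R]_n -> R) (x : 'rV[R]_n) : 'rV[R]_n :=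
  \row_i partial f i x.

Definition C2 (f : 'rV[R]_n -> R) : Prop :=
  [/\ continuous f,
      (forall i x, derivable f x (ebasis i)),
      (forall i, continuous (partial f i)),
      (forall i j x, derivable (partial f i) x (ebasis j)) &
      (forall i j, continuous (partial (partial f i) j))].

Definition coercive (f : 'rV[R]_n -> R) : Prop :=
  forall M : R, exists r : R, forall x, r < enorm x -> M < f x.

Definition s_field (f g : 'rV[R]_n -> R) (zeta : R) (x : 'rV[R]_n) : 'rV[R]_n :=
  - ((enorm (gradient f x))^-1 *: gradient f x)
  - zeta *: ((enorm (gradient g x))^-1 *: gradient g x).

End Defs.

(* Main.v *)
Require Import Defs.
From HB Require Import structures.
From mathcomp Require Import all_boot all_order all_algebra.
From mathcomp Require Import all_classical all_reals all_analysis.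
From mathcomp Require Import ring lra.
Import Order.TTheory GRing.Theory Num.Theory.
Import numFieldNormedType.Exports.
Local Open Scope classical_set_scope.
Local Open Scope ring_scope.

Section Enorm.
Set Implicit Arguments. Unset Strict Implicit. Unset Printing Implicit Defensive.
Context {R : realType} {n : nat}.
Implicit Types u v w : 'rV[R]_n.

Lemma enorm_ge0 v : 0 <= enorm v.
Proof. exact: sqrtr_ge0. Qed.

Lemma enorm_sqr v : enorm v ^+ 2 = \sum_(i < n) v 0 i ^+ 2.
Proof. by rewrite /enorm sqr_sqrtr // sumr_ge0 // => i _; exact: sqr_ge0. Qed.

Lemma enormZ (c : R) v : enorm (c *: v) = `|c| * enorm v.
Proof.
rewrite /enorm -sqrtr_sqr -sqrtrM ?sqr_ge0 // mulr_sumr; congr Num.sqrt.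
by apply: eq_bigr => i _; rewrite mxE exprMn.
Qed.

Lemma enormN v : enorm (- v) = enorm v.
Proof. by rewrite -scaleN1r enormZ normrN normr1 mul1r. Qed.

Lemma enorm_coord v i : `|v 0 i| <= enorm v.
Proof.
rewrite -(ler_pXn2r (n:=2)) // ?nnegrE ?enorm_ge0 // enorm_sqr real_normK ?num_real //.
rewrite (bigD1 i) //= lerDl sumr_ge0 // => j _; exact: sqr_ge0.
Qed.

Lemma enorm_le_sum v : enorm v <= \sum_(i < n) `|v 0 i|.
Proof.
rewrite -(ler_pXn2r (n:=2)) // ?nnegrE ?enorm_ge0 ?sumr_ge0 // enorm_sqr.
rewrite expr2 mulr_suml; apply: ler_sum => i _.
rewrite mulr_sumr (bigD1 i) //= -normrM -expr2 normrX real_normK ?num_real //.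
rewrite lerDl sumr_ge0 // => j _; exact: mulr_ge0.
Qed.

Lemma sum_le_enorm v : \sum_(i < n) `|v 0 i| <= n%:R * enorm v.
Proof.
apply: le_trans (_ : \sum_(i < n) enorm v <= _).
  by apply: ler_sum => i _; exact: enorm_coord.
by rewrite sumr_const card_ord mulr_natl.
Qed.

Lemma cauchy_schwarz (a b : 'I_n -> R) :
  (\sum_i a i * b i) ^+ 2 <= (\sum_i a i ^+ 2) * (\sum_i b i ^+ 2).
Proof.
have H : 0 <= \sum_i \sum_j (a i * b j - a j * b i) ^+ 2.
  by do 2 (apply: sumr_ge0 => ? _); exact: sqr_ge0.
have E : \sum_i \sum_j (a i * b j - a j * b i) ^+ 2 =
  \sum_i \sum_j (a i ^+ 2 * b j ^+ 2) + \sum_i \sum_j (a j ^+ 2 * b i ^+ 2)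
  - 2 * \sum_i \sum_j ((a i * b i) * (a j * b j)).
  rewrite -big_split /= mulr_sumr -sumrB; apply: eq_bigr => i _.
  rewrite -big_split /= mulr_sumr -sumrB; apply: eq_bigr => j _.
  ring.
move: H; rewrite E.
have -> : \sum_i \sum_j (a j ^+ 2 * b i ^+ 2) = (\sum_i a i ^+ 2) * (\sum_i b i ^+ 2).
  by rewrite mulr_sumr; apply: eq_bigr => i _; rewrite mulr_suml.
have -> : \sum_i \sum_j (a i ^+ 2 * b j ^+ 2) = (\sum_i a i ^+ 2) * (\sum_i b i ^+ 2).
  by rewrite mulr_suml; apply: eq_bigr => i _; rewrite mulr_sumr.
have -> : \sum_i \sum_j ((a i * b i) * (a j * b j)) = (\sum_i a i * b i) ^+ 2.
  by rewrite expr2 mulr_suml; apply: eq_bigr => i _; rewrite mulr_sumr.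
move=> H; lra.
Qed.

Lemma enormD u v : enorm (u + v) <= enorm u + enorm v.
Proof.
rewrite -(ler_pXn2r (n:=2)) // ?nnegrE ?enorm_ge0 ?addr_ge0 ?enorm_ge0 //.
rewrite sqrrD !enorm_sqr.
have -> : \sum_i (u + v) 0 i ^+ 2 =
   \sum_i u 0 i ^+ 2 + 2 * \sum_i (u 0 i * v 0 i) + \sum_i v 0 i ^+ 2.
  rewrite mulr_sumr -!big_split /=; apply: eq_bigr => i _; rewrite mxE; ring.
rewrite -!enorm_sqr.
suff : \sum_i (u 0 i * v 0 i) <= enorm u * enorm v.
  rewrite mulr2n; move=> h; lra.
apply: le_trans (ler_norm _) _.
rewrite -(ler_pXn2r (n:=2)) // ?nnegrE ?mulr_ge0 ?enorm_ge0 //.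
rewrite real_normK ?num_real // exprMn !enorm_sqr; exact: cauchy_schwarz.
Qed.

Lemma enormB_ge u v : `|enorm u - enorm v| <= enorm (u - v).
Proof.
have h1 : enorm u <= enorm (u - v) + enorm v.
  by have := enormD (u - v) v; rewrite subrK.
have e : enorm (u - v) = enorm (v - u) by rewrite -enormN opprB.
have h2 : enorm v <= enorm (u - v) + enorm u.
  by rewrite e; have := enormD (v - u) u; rewrite subrK.
rewrite ler_norml; apply/andP; split; lra.
Qed.


Lemma normalize_lip u v (a : R) : 0 < a -> a <= enorm u -> a <= enorm v ->
  enorm ((enorm u)^-1 *: u - (enorm v)^-1 *: v) <= 2 / a * enorm (u - v).
Proof.
move=> a0 au av.
set p := enorm u; set q := enorm v; set d := enorm (u - v).
have p0 : 0 < p by apply: lt_le_trans au.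
have q0 : 0 < q by apply: lt_le_trans av.
have d0 : 0 <= d by apply: enorm_ge0.
have hb : `|q - p| <= d.
  by rewrite distrC; exact: enormB_ge.
have -> : p^-1 *: u - q^-1 *: v = p^-1 *: (u - v) + (p^-1 - q^-1) *: v.
  by rewrite scalerBr scalerBl addrA subrK.
apply: le_trans (enormD _ _) _.
rewrite !enormZ -/d -/q (@ger0_norm _ p^-1); last by rewrite invr_ge0 ltW.
have -> : p^-1 - q^-1 = (q - p) / (p * q) by field; rewrite ?gt_eqF.
rewrite normrM normfV (@ger0_norm _ (p * q)); last by rewrite ltW // mulr_gt0.
have -> : `|q - p| / (p * q) * q = `|q - p| / p by field; rewrite ?gt_eqF.
apply: le_trans (_ : 2 * d / p <= _).
  have h3 : `|q - p| / p <= d / p by rewrite ler_wpM2r // invr_ge0 ltW.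
  have -> : 2 * d / p = d / p + d / p by rewrite mulr2n mulrDl mul1r mulrDl.
  by rewrite (mulrC p^-1) lerD.
rewrite mulrAC ler_wpM2r // ler_wpM2l //.
by rewrite lef_pV2 ?posrE.
Qed.

End Enorm.

Section MVT.
Set Implicit Arguments. Unset Strict Implicit. Unset Printing Implicit Defensive.
Context {R : realType}.

Lemma mvt_bound (phi dphi : R -> R) (a b M : R) :
  (forall s : R, is_derive s (1 : R) phi (dphi s)) ->
  (forall s, (a <= s <= b) \/ (b <= s <= a) -> `|dphi s| <= M) ->
  `|phi b - phi a| <= M * `|b - a|.
Proof.
move=> hd.
wlog ab : a b / a <= b.
  move=> H hM; have [ab|ba] := leP a b; first exact: H ab hM.
  rewrite distrC (distrC b); apply: (H b a); first exact: ltW.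
  by move=> s [h|h]; apply: hM; [right|left].
move=> hM.
have cont : {within `[a, b], continuous phi}.
  apply: continuous_subspaceT => x.
  have := hd x => -[dx _].
  exact/differentiable_continuous/derivable1_diffP.
have [c cab ->] := MVT_segment ab (fun x _ => hd x) cont.
rewrite normrM ler_wpM2r //; apply: hM; left.
by move: cab; rewrite in_itv /=.
Qed.


Lemma dir_derive n (h : 'rV[R]_n -> R) (z e : 'rV[R]_n) (t : R) :
  derivable h (z + t *: e) e ->
  is_derive t (1 : R) (fun s => h (z + s *: e)) ('D_e h (z + t *: e)).
Proof.
move=> dh.
have E : (fun s : R => s^-1 *: (((fun s => h (z + s *: e)) \o shift t) (s *: (1:R))
           - (fun s => h (z + s *: e)) t)) =
         (fun s : R => s^-1 *: ((h \o shift (z + t *: e)) (s *: e) - h (z + t *: e))).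
  apply/funext => s /=; congr (_ *: (h _ - _)).
  by rewrite scalerDl [s *: 1]mulr1 addrCA addrC.
split; rewrite /derivable /derive E //.
Qed.


Lemma path_bound n (h : 'rV[R]_n -> R) (r M : R) :
  (forall i x, derivable h x (ebasis i)) ->
  (forall i (z : 'rV[R]_n), (forall k, `|z 0 k| <= r) -> `|'D_(ebasis i) h z| <= M) ->
  forall x y : 'rV[R]_n, (forall k, `|x 0 k| <= r) -> (forall k, `|y 0 k| <= r) ->
  `|h y - h x| <= M * \sum_(k < n) `|y 0 k - x 0 k|.
Proof.
move=> hd hM x y hx hy.
pose zk (k : nat) : 'rV[R]_n := \row_i (if (i < k)%N then y 0 i else x 0 i).
have zkB k i : `|zk k 0 i| <= r by rewrite mxE; case: ifP.
suff H : forall k, (k <= n)%N ->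
    `|h (zk k) - h x| <= M * \sum_(i < n | (i < k)%N) `|y 0 i - x 0 i|.
  have := H n (leqnn n).
  have -> : zk n = y by apply/rowP => i; rewrite mxE ltn_ord.
  by under eq_bigl do rewrite ltn_ord.
elim=> [_|k IH kn].
  have -> : zk 0%N = x by apply/rowP => i; rewrite mxE.
  by rewrite subrr normr0 big_pred0 // mulr0.
pose o := Ordinal kn.
pose d := y 0 o - x 0 o.
have Ez : zk k.+1 = zk k + d *: ebasis o.
  apply/rowP => i; rewrite !mxE /= -val_eqE /=.
  case: (ltngtP i k) => [ik|ki|ik].
  - by rewrite ltnS ltnW // mulr0 addr0.
  - by rewrite mulr0 addr0 ltnS leqNgt ki.
  - rewrite -ik ltnS leqnn mulr1 /d; have -> : o = i by apply/val_inj. 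
    by rewrite addrC subrK.
have step : `|h (zk k.+1) - h (zk k)| <= M * `|d|.
  rewrite Ez.
  have := @mvt_bound (fun s => h (zk k + s *: ebasis o))
     (fun s => 'D_(ebasis o) h (zk k + s *: ebasis o)) 0 d M.
  rewrite scale0r addr0 subr0; apply.
    by move=> s; apply: dir_derive.
  move=> s hs; apply: hM => j; rewrite !mxE /=.
  have [->|jo] := eqVneq j o; last first.
    by move: jo; rewrite -val_eqE /=; case: eqP => //= _ _; rewrite mulr0 addr0; case: ifP.
  rewrite ltnn mulr1.
  move: (hx o) (hy o); rewrite /d !ler_norml => /andP[h1 h2] /andP[h3 h4].
  by case: hs; rewrite /d => /andP[h5 h6]; apply/andP; split; lra.
rewrite (bigD1 o) /=; last by rewrite ltnS leqnn.
have -> : \sum_(i < n | (i < k.+1)%N && (i != o)) `|y 0 i - x 0 i| =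
          \sum_(i < n | (i < k)%N) `|y 0 i - x 0 i|.
  apply: eq_bigl => i; rewrite ltnS leq_eqVlt -val_eqE /=.
  by case: (ltngtP i k).
apply: le_trans (_ : `|h (zk k.+1) - h (zk k)| + `|h (zk k) - h x| <= _).
  by have := ler_normD (h (zk k.+1) - h (zk k)) (h (zk k) - h x); rewrite addrA subrK.
rewrite mulrDr lerD //; exact: IH (ltnW kn).
Qed.

End MVT.

Section Aux.
Set Implicit Arguments. Unset Strict Implicit. Unset Printing Implicit Defensive.
Context {R : realType}.

Lemma cont_sum (T : topologicalType) m (F : 'I_m -> T -> R) :
  (forall i, continuous (F i)) -> continuous (fun x => \sum_(i < m) F i x).
Proof.
move=> hF; apply: continuous_big => //; exact: add_continuous.
Qed.

Lemma cont_add (T : topologicalType) (a b : T -> R) :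
  continuous a -> continuous b -> continuous (fun x => a x + b x).
Proof. by move=> ca cb x; exact: (@continuousD _ _ _ a b x (ca x) (cb x)). Qed.

Lemma cont_norm (T : topologicalType) (h : T -> R) :
  continuous h -> continuous (fun x => `|h x|).
Proof.
move=> ch x; apply: (continuous_comp (ch x)); exact: norm_continuous.
Qed.

Lemma cont_sqr (T : topologicalType) (h : T -> R) :
  continuous h -> continuous (fun x => h x ^+ 2).
Proof.
move=> ch; have -> : (fun x => h x ^+ 2) = h \* h by apply/funext => y; rewrite expr2.
by move=> x; apply: continuousM; exact: ch.
Qed.

Lemma cont_sqrt (T : topologicalType) (h : T -> R) :
  continuous h -> continuous (fun x => Num.sqrt (h x)).
Proof.
move=> ch x; apply: (continuous_comp (ch x)); exact: sqrt_continuous.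
Qed.

Lemma le_sum_term (I : finType) (G : I -> R) i0 :
  (forall i, 0 <= G i) -> G i0 <= \sum_i G i.
Proof. by move=> h; rewrite (bigD1 i0) //= lerDl sumr_ge0. Qed.

Lemma enorm_gt0 n (v : 'rV[R]_n) : v != 0 -> 0 < enorm v.
Proof.
move=> v0; rewrite lt_def enorm_ge0 andbT; apply: contra v0 => /eqP h.
have S0 : \sum_(i < n) v 0 i ^+ 2 = 0.
  by rewrite -enorm_sqr h expr0n.
apply/eqP/rowP => i; rewrite mxE.
have /psumr_eq0P H := S0.
by apply/eqP; rewrite -sqrf_eq0 H // => j _; exact: sqr_ge0.
Qed.


Lemma grad_lip n (h : 'rV[R]_n -> R) (r M : R) :
  (forall i j x, derivable (partial h i) x (ebasis j)) ->
  (forall i j (z : 'rV[R]_n), (forall k, `|z 0 k| <= r) ->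
       `|partial (partial h i) j z| <= M) ->
  forall x y : 'rV[R]_n, (forall k, `|x 0 k| <= r) -> (forall k, `|y 0 k| <= r) ->
  enorm (gradient h x - gradient h y) <= n%:R * (M * n%:R) * enorm (x - y).
Proof.
move=> hd hM x y hx hy.
apply: le_trans (enorm_le_sum _) _.
apply: le_trans (_ : \sum_(i < n) (M * (n%:R * enorm (x - y))) <= _); last first.
  rewrite sumr_const card_ord -mulr_natl le_eqVlt; apply/orP; left; apply/eqP; ring.
apply: ler_sum => i _; rewrite !mxE.
have := @path_bound R n (partial h i) r M (hd i) (hM i) y x hy hx.
move=> H; apply: le_trans H _.
have M0 : 0 <= M.
  apply: le_trans (hM i i 0 _) => [|k]; first exact: normr_ge0.
  rewrite mxE normr0; exact: le_trans (normr_ge0 _) (hx k).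
rewrite ler_wpM2l //; apply: le_trans (sum_le_enorm (x - y)).
by apply: ler_sum => k _; rewrite !mxE.
Qed.

Lemma sdiff_eq n (a b c d : 'rV[R]_n) (z : R) :
  (- a - z *: c) - (- b - z *: d) = - (a - b) + (- z) *: (c - d).
Proof. by apply/rowP => i; rewrite !mxE; ring. Qed.

Lemma final_arith (A Bv E1 E2 D C p q z : R) :
  A <= p * E1 -> E1 <= C * D -> Bv <= q * E2 -> E2 <= C * D ->
  0 <= D -> 0 <= Bv -> 0 <= p -> 0 <= q -> 0 <= z <= 1 ->
  A + `|z| * Bv <= (p * C + q * C + 1) * D.
Proof.
move=> h1 h3 h2 h4 D0 B0 p0 q0 /andP[z0 z1].
have hA : A <= p * (C * D) by apply: le_trans h1 _; rewrite ler_wpM2l.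
have hB : Bv <= q * (C * D) by apply: le_trans h2 _; rewrite ler_wpM2l.
have hz : `|z| * Bv <= Bv by rewrite ger0_norm // ler_piMl.
have -> : (p * C + q * C + 1) * D = p * (C * D) + q * (C * D) + D.
  by rewrite !mulrDl mul1r !mulrA.
apply: le_trans (lerD hA (le_trans hz hB)) _.
by rewrite lerDl.
Qed.

End Aux.

Theorem lemma5p4 (R : realType) (n : nat) (f g : 'rV[R]_n -> R)
  (A1 : coercive f)
  (A2 : forall x, g x <= 0 -> gradient f x != 0)
  (A3 : forall x, g x <= 0 -> gradient g x != 0)
  (A4f : C2 f) (A4g : C2 g)
  (x0 : 'rV[R]_n) (hx0 : g x0 <= 0)
  (hne : exists x, f x <= f x0 /\ g x <= 0)
  (zeta : R) (hzeta : 0 <= zeta <= 1) :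
  exists L : R, 0 < L /\
    forall x y, f x <= f x0 -> g x <= 0 -> f y <= f x0 -> g y <= 0 ->
      enorm (s_field f g zeta x - s_field f g zeta y) <= L * enorm (x - y).
Proof.
case: A4f => cf df cpf dpf cppf; case: A4g => cg dg cpg dpg cppg.
have [r hr] := A1 (f x0).
have Kr x : f x <= f x0 -> enorm x <= r.
  by move=> hx; rewrite leNgt; apply/negP => /hr; rewrite ltNge hx.
case: hne => xk [fk gk].
have r0 : 0 <= r := le_trans (enorm_ge0 xk) (Kr xk fk).
pose B := [set z : 'rV[R]_n | forall k, `|z 0 k| <= r].
have cB : compact B.
  have := @rV_compact R n (fun _ => `[-r, r]%classic) (fun _ => @segment_compact R (-r) r).
  congr compact; apply/funext => z; apply/propext; split => h k; move: (h k);
    by rewrite /= in_itv /= ler_norml.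
pose K := f @^-1` [set t | t <= f x0] `&` g @^-1` [set t | t <= 0].
have KB : K `<=` B.
  move=> x [/= hf _] k; apply: le_trans (enorm_coord _ _) (Kr _ hf).
have cK : compact K.
  apply: subclosed_compact cB KB.
  apply: closedI; apply: preimage_closed; try (by move=> x _; exact: cf || exact: cg);
    [exact: closed_le | exact: closed_le].
have K0 : K !=set0 by exists xk.
pose F := fun z => \sum_(i < n) \sum_(j < n)
   (`|partial (partial f i) j z| + `|partial (partial g i) j z|).
have cF : continuous F.
  apply: cont_sum => i; apply: cont_sum => j.
  by apply: cont_add; apply: cont_norm.
have B0 : B !=set0.
  by exists 0 => k; rewrite mxE normr0.
have [c cB' Fmax] := EVT_max_rV B0 cB (continuous_subspaceT cF).
pose M0 := F c.
have hMf i j z : B z -> `|partial (partial f i) j z| <= M0.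
  move=> Bz; apply: le_trans (Fmax z (mem_set Bz)).
  apply: le_trans (le_sum_term (G := fun i => \sum_(j < n)
     (`|partial (partial f i) j z| + `|partial (partial g i) j z|)) i _) => /=.
    apply: le_trans (le_sum_term (G := fun j =>
     (`|partial (partial f i) j z| + `|partial (partial g i) j z|)) j _) => /=.
      by rewrite lerDl.
    by move=> ?; rewrite addr_ge0.
  by move=> ?; rewrite sumr_ge0 // => ? _; rewrite addr_ge0.
have hMg i j z : B z -> `|partial (partial g i) j z| <= M0.
  move=> Bz; apply: le_trans (Fmax z (mem_set Bz)).
  apply: le_trans (le_sum_term (G := fun i => \sum_(j < n)
     (`|partial (partial f i) j z| + `|partial (partial g i) j z|)) i _) => /=.
    apply: le_trans (le_sum_term (G := fun j =>
     (`|partial (partial f i) j z| + `|partial (partial g i) j z|)) j _) => /=.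
      by rewrite lerDr.
    by move=> ?; rewrite addr_ge0.
  by move=> ?; rewrite sumr_ge0 // => ? _; rewrite addr_ge0.
pose C := n%:R * (M0 * n%:R).
have Lf x y : B x -> B y ->
    enorm (gradient f x - gradient f y) <= C * enorm (x - y).
  by move=> Bx By; exact: (grad_lip dpf (fun i j z Bz => hMf i j z Bz) Bx By).
have Lg x y : B x -> B y ->
    enorm (gradient g x - gradient g y) <= C * enorm (x - y).
  by move=> Bx By; exact: (grad_lip dpg (fun i j z Bz => hMg i j z Bz) Bx By).
have enE (h : 'rV[R]_n -> R) z :
    enorm (gradient h z) = Num.sqrt (\sum_(i < n) partial h i z ^+ 2).
  by rewrite /enorm; congr Num.sqrt; apply: eq_bigr => i _; rewrite mxE.
have lowb (h : 'rV[R]_n -> R) : (forall i, continuous (partial h i)) ->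
    (forall x, K x -> gradient h x != 0) ->
    exists2 a, 0 < a & forall x, K x -> a <= enorm (gradient h x).
  move=> ch nz.
  have ce : continuous (fun z => Num.sqrt (\sum_(i < n) partial h i z ^+ 2)).
    by apply: cont_sqrt; apply: cont_sum => i; apply: cont_sqr.
  have [m mK hm] := EVT_min_rV K0 cK (continuous_subspaceT ce).
  exists (enorm (gradient h m)).
    by apply: enorm_gt0; apply: nz; rewrite inE in mK.
  by move=> x Kx; rewrite !enE; apply: hm; rewrite inE.
have [af af0 haf] := lowb f cpf (fun x Kx => A2 x (proj2 Kx)).
have [ag ag0 hag] := lowb g cpg (fun x Kx => A3 x (proj2 Kx)).
have C0 : 0 <= C.
  have M00 : 0 <= M0.
    by rewrite /M0 /F sumr_ge0 // => i _; rewrite sumr_ge0 // => j _; rewrite addr_ge0.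
  by rewrite /C mulr_ge0 // mulr_ge0.
exists (2 / af * C + 2 / ag * C + 1); split.
  by rewrite ltr_wpDl // addr_ge0 // mulr_ge0 // divr_ge0 // ltW.
move=> x y fx gx fy gy.
have Kx : K x by split.
have Ky : K y by split.
have E : s_field f g zeta x - s_field f g zeta y =
  - ((enorm (gradient f x))^-1 *: gradient f x - (enorm (gradient f y))^-1 *: gradient f y)
  + (- zeta) *: ((enorm (gradient g x))^-1 *: gradient g x
                  - (enorm (gradient g y))^-1 *: gradient g y).
  by rewrite /s_field; exact: sdiff_eq.
rewrite E; apply: le_trans (enormD _ _) _.
rewrite enormN enormZ normrN.
have h1 := normalize_lip af0 (haf x Kx) (haf y Ky).
have h2 := normalize_lip ag0 (hag x Kx) (hag y Ky).
have h3 := Lf x y (KB _ Kx) (KB _ Ky).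
have h4 := Lg x y (KB _ Kx) (KB _ Ky).
apply: (final_arith h1 h3 h2 h4 (enorm_ge0 _) (enorm_ge0 _) _ _ hzeta).
  by rewrite divr_ge0 // ltW.
by rewrite divr_ge0 // ltW.
Qed.
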